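(* Let $\mathcal{H}$ and $\mathcal{H}'$ be two hypertrees with the same vertex set. Then they are equivalent if and only if $\mathcal{H}'$ can be obtained from $\mathcal{H}$ by a finite sequence of the following operations: removing/adding an edge with exactly one vertex; removing/adding an edge equal to the whole vertex set; adding an edge with the same vertices as an existing edge; removing an edge for which another edge with the same vertices exists; adding an edge that is the nonempty intersection of some edges; adding an edge that is the union of two non-disjoint edges; adding an edge that is the connected union of some edges; removing an edge that is the intersection of other edges; removing an edge that is the connected union of other edges.
   Context: A hypergraph has a finite vertex set and a finite family (repetitions allowed) of nonempty subsets of it (edges). A host tree is a tree on the vertex set in which every edge induces a connected subgraph; a hypertree is a hypergraph with a host tree. Hypergraphs on the same vertex set are equivalent if they have the same host trees. A union of sets is connected if the intersection graph of the sets is connected. *)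

(* Defs.v *)
From mathcomp Require Import all_boot.
Set Implicit Arguments. Unset Strict Implicit. Unset Printing Implicit Defensive.

(* A hypergraph on the finite vertex set V: a finite family (a sequence,
   repetitions allowed) of nonempty subsets of V. *)
Definition hypergraph (V : finType) (H : seq {set V}) : Prop :=
  all (fun e => e != set0) H.

(* A simple graph on V is given by its set of edges, each a 2-element set. *)
Definition adj (V : finType) (E : {set {set V}}) : rel V :=
  fun x y => [set x; y] \in E.

Definition is_tree (V : finType) (E : {set {set V}}) : Prop :=
  [/\ (forall e, e \in E -> #|e| = 2),
      (forall x y : V, connect (adj E) x y) &
      ~ (exists c : seq V, [/\ uniq c, 3 <= size c & cycle (adj E) c])].

Definition induces_connected (V : finType) (E : {set {set V}}) (S : {set V}) : Prop :=
  forall x y, x \in S -> y \in S ->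
    connect (fun a b => [&& a \in S, b \in S & adj E a b]) x y.

Definition host_tree (V : finType) (H : seq {set V}) (E : {set {set V}}) : Prop :=
  is_tree E /\ (forall e, e \in H -> induces_connected E e).

Definition hypertree (V : finType) (H : seq {set V}) : Prop :=
  hypergraph H /\ exists E, host_tree H E.

Definition equivalent (V : finType) (H H' : seq {set V}) : Prop :=
  forall E, host_tree H E <-> host_tree H' E.

(* the union of the family F is connected: the intersection graph of the
   sets in F is connected *)
Definition connected_family (V : finType) (F : seq {set V}) : Prop :=
  forall i j : 'I_(size F),
    connect (fun a b : 'I_(size F) => nth set0 F a :&: nth set0 F b != set0) i j.

Definition add_ok (V : finType) (H : seq {set V}) (e : {set V}) : Prop :=
  #|e| = 1 \/
  e = setT \/
  e \in H \/
  (exists F : seq {set V}, [/\ F != [::], all (mem H) F,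
       e = \bigcap_(f <- F) f & e != set0]) \/
  (exists e1 e2, [/\ e1 \in H, e2 \in H, e1 :&: e2 != set0 & e = e1 :|: e2]) \/
  (exists F : seq {set V}, [/\ F != [::], all (mem H) F,
           connected_family F & e = \bigcup_(f <- F) f]).

(* Conditions for removing the edge e, where H is the family of the other
   edges (remaining after the removal) *)
Definition remove_ok (V : finType) (H : seq {set V}) (e : {set V}) : Prop :=
  #|e| = 1 \/
  e = setT \/
  e \in H \/
  (exists F : seq {set V}, [/\ F != [::], all (mem H) F &
       e = \bigcap_(f <- F) f]) \/
  (exists F : seq {set V}, [/\ F != [::], all (mem H) F,
       connected_family F & e = \bigcup_(f <- F) f]).

(* One operation; families are multisets, i.e. sequences up to permutation *)
Inductive step (V : finType) (H : seq {set V}) : seq {set V} -> Prop :=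
  | step_add e H' : add_ok H e -> perm_eq H' (e :: H) -> step H H'
  | step_remove e H' : remove_ok H' e -> perm_eq H (e :: H') -> step H H'.

Inductive reachable (V : finType) (H : seq {set V}) : seq {set V} -> Prop :=
  | reach_refl : reachable H H
  | reach_step H1 H2 : reachable H H1 -> step H1 H2 -> reachable H H2.

(* Main.v *)
Require Import Defs.
From mathcomp Require Import all_boot.
Set Implicit Arguments. Unset Strict Implicit. Unset Printing Implicit Defensive.

Section Graph.
Variable V : finType.
Implicit Types (E T : {set {set V}}) (S A B : {set V}) (x y u v a b : V).

Definition rs E S : rel V := fun a b => [&& a \in S, b \in S & adj E a b].

Lemma adj_sym E : symmetric (adj E).
Proof. by move=> x y; rewrite /adj setUC. Qed.

Lemma rs_sym E S : symmetric (rs E S).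
Proof. by move=> x y; rewrite /rs adj_sym; case: (x \in S); case: (y \in S). Qed.

Lemma set2_eq u v a b : [set u; v] = [set a; b] -> (u = a /\ v = b) \/ (u = b /\ v = a).
Proof.
move=> e.
have hu : u \in [set a; b] by rewrite -e set21.
have hv : v \in [set a; b] by rewrite -e set22.
have ha : a \in [set u; v] by rewrite e set21.
have hb : b \in [set u; v] by rewrite e set22.
move: hu hv ha hb; rewrite !inE.
by case/orP=> /eqP hu; case/orP=> /eqP hv; case/orP=> /eqP ha; case/orP=> /eqP hb;
  subst; auto.
Qed.

Lemma connect_add (r r' : rel V) a b p q :
  (forall u v, r' u v -> r u v \/ (u = a /\ v = b) \/ (u = b /\ v = a)) ->
  connect r' p q ->
  [\/ connect r p q, connect r p a /\ connect r b q | connect r p b /\ connect r a q].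
Proof.
move=> hr /connectP[s hs ->] {q}.
elim: s p hs => [|y s IH] p /=; first by move=> _; constructor 1.
case/andP=> hpy /IH hq.
case: (hr _ _ hpy) hq => [h0|[[-> ->]|[-> ->]]] [h|[h1 h2]|[h1 h2]].
- by constructor 1; apply: connect_trans (connect1 h0) h.
- by constructor 2; split => //; apply: connect_trans (connect1 h0) h1.
- by constructor 3; split => //; apply: connect_trans (connect1 h0) h1.
- by constructor 2; split; rewrite ?connect0.
- by constructor 2; split; rewrite ?connect0.
- by constructor 1.
- by constructor 3; split; rewrite ?connect0.
- by constructor 1.
- by constructor 3; split; rewrite ?connect0.
Qed.

Lemma adj_split E a b u v : adj E u v ->
  adj (E :\ [set a; b]) u v \/ (u = a /\ v = b) \/ (u = b /\ v = a).
Proof.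
rewrite /adj in_setD1; case: eqP => [/set2_eq h _|_ ->]; by [right | left].
Qed.

Definition bridge E := forall a b, [set a; b] \in E ->
  ~~ connect (adj (E :\ [set a; b])) a b.


Lemma tree_bridge E : is_tree E -> bridge E.
Proof.
case=> h2 _ hnc a b hab; apply/negP => hc.
have ab : a != b.
  apply/eqP => e; move: (h2 _ hab); by rewrite e setUid cards1.
move/connectP: hc => [p hp]; case: (shortenP hp) => p' hp' up' _ {p hp} hb.
case: p' hp' up' hb => [|z [|z' p'']] hp' up' hb.
- by rewrite /= hb eqxx in ab.
- by move: hp'; rewrite /= in hb; rewrite /= -hb /adj in_setD1 eqxx.
- apply: hnc; exists [:: a, z, z' & p'']; split => //.
  rewrite /cycle rcons_path; apply/andP; split.
    by apply: sub_path hp' => u v; rewrite /adj in_setD1 => /andP[].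
  by rewrite /= in hb; rewrite /= -hb adj_sym.
Qed.

Lemma bridge_tree E : (forall e, e \in E -> #|e| = 2) ->
  (forall x y, connect (adj E) x y) -> bridge E -> is_tree E.
Proof.
move=> h2 hc hb; split=> // -[[|a [|z p']] [uc sc cc]] //.
move: cc; rewrite /cycle rcons_path => /andP[/= /andP[haz hp] hba].
set b := last z p' in hba.
have hab : [set a; b] \in E by rewrite /adj setUC in hba.
apply: (negP (hb _ _ hab)).
move: uc => /= /andP[]; rewrite inE negb_or => /andP[az anp] /andP[znp up].
apply: (connect_trans (y := z)).
  apply: connect1; rewrite /adj in_setD1; move: haz; rewrite /adj => ->; rewrite andbT.
  apply/eqP => /set2_eq [[_ zb]|[ab za]].
    have : last z p' \in p' by case: (p') sc => // y q _; rewrite /= mem_last.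
    by rewrite -/b -zb (negbTE znp).
  by rewrite za eqxx in az.
apply/connectP; exists p' => //.
apply: (sub_in_path (P := mem (z :: p')) _ _ hp); last by apply/allP.
move=> u v uin vin huv; rewrite /adj in_setD1; move: huv; rewrite /adj => ->; rewrite andbT.
apply/eqP => /set2_eq [[ua _]|[_ va]].
  by move: uin; rewrite ua inE (negbTE az) (negbTE anp).
by move: vin; rewrite va inE (negbTE az) (negbTE anp).
Qed.

Lemma in_bigcapP z (F : seq {set V}) (P : pred {set V}) :
  (z \in \bigcap_(f <- F | P f) f) = all (fun f : {set V} => P f ==> (z \in f)) F.
Proof.
elim: F => [|f F IH]; first by rewrite big_nil inE.
by rewrite big_cons /=; case: (P f) => //=; rewrite ?inE IH.
Qed.

Lemma in_bigcap z (F : seq {set V}) :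
  (z \in \bigcap_(f <- F) f) = all (fun f : {set V} => z \in f) F.
Proof. by rewrite in_bigcapP. Qed.

Lemma in_bigcup z (F : seq {set V}) :
  (z \in \bigcup_(f <- F) f) = has (fun f : {set V} => z \in f) F.
Proof.
elim: F => [|f F IH]; first by rewrite big_nil inE.
by rewrite big_cons inE IH.
Qed.

Lemma rs_sub E A B : A \subset B -> subrel (connect (rs E A)) (connect (rs E B)).
Proof.
move=> /subsetP sAB; apply: connect_sub => u v /and3P[uA vA huv].
by apply: connect1; rewrite /rs (sAB _ uA) (sAB _ vA).
Qed.

Lemma conv E S x s : bridge E -> induces_connected E S -> uniq (x :: s) ->
  path (adj E) x s -> x \in S -> last x s \in S -> all (mem S) (x :: s).
Proof.
move=> hb hS; elim: s x => [|y s IH] x /=; first by move=> _ _ ->.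
move=> /andP[nx us] /andP[hxy hp] xS lS.
rewrite xS /=.
suff yS : y \in S by apply: IH.
apply/negPn/negP => yNS.
have h1 : connect (adj (E :\ [set x; y])) y (last y s).
  apply/connectP; exists s => //.
  apply: (sub_in_path (P := mem (y :: s)) _ _ hp); last by apply/allP.
  move=> u v uin vin huv; rewrite /adj in_setD1; move: huv; rewrite /adj => ->.
  rewrite andbT; apply/eqP => /set2_eq [[ux _]|[_ vx]].
    by move: nx; rewrite -ux uin.
  by move: nx; rewrite -vx vin.
have h3 : connect (adj (E :\ [set x; y])) x (last y s).
  apply: (connect_sub _ (hS _ _ xS lS)) => u v /and3P[uS vS huv].
  apply: connect1; rewrite /adj in_setD1; move: huv; rewrite /adj => ->.
  rewrite andbT; apply/eqP => /set2_eq [[_ vy]|[uy _]].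
    by rewrite -vy vS in yNS.
  by rewrite -uy uS in yNS.
have := hb x y hxy; rewrite (connect_trans h3) //.
by rewrite (sym_connect_sym (adj_sym _)).
Qed.

Lemma tree_upath E p q : is_tree E ->
  exists s, [/\ uniq (p :: s), path (adj E) p s & q = last p s].
Proof.
case=> _ hc _; move/connectP: (hc p q) => [s hs ->].
case: (shortenP hs) => s' hs' us' _; by exists s'.
Qed.

Lemma path_rs E S x s : path (adj E) x s -> all (mem S) (x :: s) ->
  connect (rs E S) x (last x s).
Proof.
move=> hp hall; apply/connectP; exists s => //.
apply: (sub_in_path (P := mem S) _ hall hp).
by move=> u v uS vS huv; rewrite /rs uS vS.
Qed.

Lemma bigcap_conn E F : is_tree E ->
  (forall f, f \in F -> induces_connected E f) ->
  induces_connected E (\bigcap_(f <- F) f).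
Proof.
move=> hT hF p q; rewrite !in_bigcap => /allP hp /allP hq.
case: (tree_upath p q hT) => s [us ps hql].
rewrite hql in hq *; apply: path_rs => //; apply/allP => z zs.
have : z \in \bigcap_(f <- F) f; last by []. rewrite in_bigcap; apply/allP => f fF.
have := conv (tree_bridge hT) (hF f fF) us ps (hp f fF) (hq f fF).
by move/allP; apply.
Qed.

Lemma bigcup_conn E F :
  (forall f, f \in F -> induces_connected E f) -> connected_family F ->
  induces_connected E (\bigcup_(f <- F) f).
Proof.
move=> hF hc p q; rewrite !in_bigcup => /hasP[f fF pf] /hasP[g gF qg].
pose U := \bigcup_(f <- F) f.
have sub k : k < size F -> nth set0 F k \subset U.
  move=> hk; apply/subsetP => z zk; rewrite in_bigcup; apply/hasP.
  by exists (nth set0 F k) => //; apply: mem_nth.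
have hi : index f F < size F by rewrite index_mem.
have hj : index g F < size F by rewrite index_mem.
have C : forall k : 'I_(size F),
    connect (fun a b : 'I_(size F) => nth set0 F a :&: nth set0 F b != set0)
      (Ordinal hi) k -> forall z, z \in nth set0 F k -> connect (rs E U) p z.
  move=> k /connectP[s hs ->] {k}.
  elim/last_ind: s hs => [|s k IH] /=.
    move=> _ z; rewrite nth_index // => zf.
    apply: (rs_sub (sub _ hi)); rewrite nth_index //; exact: (hF f fF p z pf zf).
  rewrite rcons_path last_rcons => /andP[hs /set0Pn[z0]]; rewrite inE => /andP[z0a z0b].
  move=> z zk; apply: (connect_trans (IH hs _ z0a)).
  apply: (rs_sub (sub _ (ltn_ord k))); apply: (hF _ (mem_nth _ (ltn_ord k))) => //.
have := C (Ordinal hj) (hc _ _) q; rewrite /= nth_index //; exact.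
Qed.

Lemma setT_conn E : is_tree E -> induces_connected E setT.
Proof.
case=> _ hc _ p q _ _; rewrite (@eq_connect _ _ (adj E)) //.
by move=> u v; rewrite /rs !inE.
Qed.

Lemma set1_conn E z : induces_connected E [set z].
Proof. by move=> p q; rewrite !inE => /eqP -> /eqP ->; apply: connect0. Qed.

Lemma union2_conn E e1 e2 : induces_connected E e1 -> induces_connected E e2 ->
  e1 :&: e2 != set0 -> induces_connected E (e1 :|: e2).
Proof.
move=> h1 h2 /set0Pn[z]; rewrite inE => /andP[z1 z2].
have s1 : e1 \subset e1 :|: e2 by apply: subsetUl.
have s2 : e2 \subset e1 :|: e2 by apply: subsetUr.
have toz p : p \in e1 :|: e2 -> connect (rs E (e1 :|: e2)) p z.
  rewrite inE => /orP[pe|pe]; [apply: (rs_sub s1); exact: h1|apply: (rs_sub s2); exact: h2].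
move=> p q pe qe; apply: (connect_trans (toz p pe)).
by rewrite (sym_connect_sym (rs_sym _ _)); apply: toz.
Qed.

Lemma ok_conn E K e : is_tree E -> (forall f, f \in K -> induces_connected E f) ->
  add_ok K e \/ remove_ok K e -> induces_connected E e.
Proof.
move=> hT hK.
have capc F : all (mem K) F -> induces_connected E (\bigcap_(f <- F) f).
  move/allP => hF; apply: bigcap_conn => // f /hF; exact: hK.
have cupc F : all (mem K) F -> connected_family F -> induces_connected E (\bigcup_(f <- F) f).
  move/allP => hF; apply: bigcup_conn => // f /hF; exact: hK.
have c1 : #|e| = 1 -> induces_connected E e.
  by move/eqP/cards1P => [z ->]; apply: set1_conn.
case=> [[h|[->|[h|[[F [_ hF -> _]]|[[e1 [e2 [h1 h2 h3 ->]]]|[F [_ hF hc ->]]]]]]]|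
        [h|[->|[h|[[F [_ hF ->]]|[F [_ hF hc ->]]]]]]].
all: try (by apply: c1); try (by apply: setT_conn); try (by apply: hK);
  try (by apply: capc); try (by apply: cupc).
by apply: union2_conn => //; apply: hK.
Qed.

Lemma step_host (H1 H2 : seq {set V}) E : step H1 H2 -> (host_tree H1 E <-> host_tree H2 E).
Proof.
case=> [e H' hok hp|e H' hok hp]; split; case=> hT hH; split => // f.
- rewrite (perm_mem hp) inE => /orP[/eqP->|]; last exact: hH.
  by apply: (ok_conn hT hH); left.
- by move=> fH; apply: hH; rewrite (perm_mem hp) inE fH orbT.
- by move=> fH; apply: hH; rewrite (perm_mem hp) inE fH orbT.
- rewrite (perm_mem hp) inE => /orP[/eqP->|]; last exact: hH.
  by apply: (ok_conn hT hH); right.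
Qed.

Lemma reach_equiv (H H' : seq {set V}) : reachable H H' -> equivalent H H'.
Proof.
elim=> [|H1 H2 _ IH hs] E; first by [].
have := step_host E hs; have := IH E; tauto.
Qed.

Definition Mg (G : seq {set V}) (e : {set V}) := \bigcap_(f <- G | e \subset f) f.

Lemma set2_sub x y (f : {set V}) : ([set x; y] \subset f) = (x \in f) && (y \in f).
Proof. by rewrite subUset !sub1set. Qed.

Lemma key1 (G : seq {set V}) T S x y w : host_tree G T ->
  (forall E, host_tree G E -> induces_connected E S) ->
  [set x; y] \in T -> x \in S -> y \in S -> w \in Mg G [set x; y] -> w \notin S ->
  ~~ connect (adj (T :\ [set x; y])) x w -> False.
Proof.
move=> [treeT hG] hS hxy xS yS wM wNS nxw.
have hb := tree_bridge treeT.
case: treeT => h2 hconn _.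
set Txy := T :\ [set x; y].
have symc : connect_sym (adj Txy) := sym_connect_sym (adj_sym _).
have xw : x != w by apply: contraNneq wNS => <-.
set T' := Txy :|: [set [set x; w]].
have adjT' u v : adj T' u v = adj Txy u v || ([set u; v] == [set x; w]).
  by rewrite /adj !inE.
have sub1 u v : adj Txy u v -> adj T' u v by rewrite adjT' => ->.
have symT' : connect_sym (adj T') := sym_connect_sym (adj_sym _).
have hxy' := hb x y hxy.
have yw : connect (adj Txy) y w.
  have [h|[_ h]|[h _]] // := connect_add (fun u v => @adj_split T x y u v) (hconn x w); first by rewrite h in nxw.
  by rewrite h in hxy'.
have subT : subrel (connect (adj Txy)) (connect (adj T')).
  by apply: connect_sub => u v /sub1/connect1.
have cxy : connect (adj T') x y.
  apply: (connect_trans (y := w)); first by apply: connect1; rewrite adjT' eqxx orbT.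
  by apply: subT; rewrite symc.
have treeT' : is_tree T'.
  apply: bridge_tree.
  - move=> e; rewrite !inE => /orP[/andP[_ /h2] //|/eqP ->].
    by rewrite cards2 xw.
  - move=> p q; apply: (connect_sub _ (hconn p q)) => u v.
    case/(adj_split x y) => [h|[[-> ->]|[-> ->]]]; first by apply/connect1/sub1.
      exact: cxy.
    by rewrite symT'.
  - move=> a b; rewrite /T' in_setU in_set1 => /orP[hab|/eqP hab].
    + apply/negP => hc.
      have hab' : [set a; b] \in T by move: hab; rewrite inE => /andP[].
      have spl : forall u v, adj (T' :\ [set a; b]) u v -> adj (Txy :\ [set a; b]) u v \/
          (u = x /\ v = w) \/ (u = w /\ v = x).
        move=> u v; rewrite /adj !inE => /andP[h1 /orP[h3|h3]]; first by left; rewrite h1 h3.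
        by right; apply: set2_eq; apply/eqP.
      have := connect_add spl hc.
      have r1 : subrel (connect (adj (Txy :\ [set a; b]))) (connect (adj Txy)).
        by apply: connect_sub => u v h; apply: connect1; move: h; rewrite /adj inE => /andP[].
      have r2 : subrel (connect (adj (Txy :\ [set a; b]))) (connect (adj (T :\ [set a; b]))).
        apply: connect_sub => u v h; apply: connect1; move: h; rewrite /adj !inE.
        by case/and3P => -> _ ->.
      have eab : connect (adj Txy) a b by apply: connect1.
      case=> [h|[h1 h3]|[h1 h3]].
      * by move: (hb a b hab'); rewrite (r2 _ _ h).
      * move/r1: h1; move/r1: h3 => h3 h1.
        move: nxw; rewrite symc in h3; rewrite symc in h1; rewrite (connect_trans h1 (connect_trans eab h3)).
        by [].
      * move/r1: h1; move/r1: h3 => h3 h1.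
        move: nxw; rewrite symc in eab; rewrite (connect_trans h3 (connect_trans eab h1)).
        by [].
    + rewrite hab; apply/negP => hc.
      have : connect (adj Txy) a b.
        apply: (connect_sub _ hc) => u v; rewrite /adj in_setD1 in_setU in_set1.
        case/andP=> h1 /orP[h3|h3]; first exact: connect1.
        by rewrite h3 in h1.
      case: (set2_eq hab) => [[-> ->]|[-> ->]]; first by rewrite (negbTE nxw).
      by rewrite symc (negbTE nxw).
have hG' : forall f, f \in G -> induces_connected T' f.
  move=> f fG.
  have wf : x \in f -> y \in f -> w \in f.
    move=> xf yf; move: wM; rewrite /Mg in_bigcapP => /allP/(_ f fG).
    by rewrite set2_sub xf yf.
  have symf : connect_sym (rs T' f) := sym_connect_sym (rs_sym _ _).
  have cf : x \in f -> y \in f -> connect (rs T' f) x y.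
    move=> xf yf; have wf' := wf xf yf.
    apply: (connect_trans (y := w)).
      by apply: connect1; rewrite /rs xf wf' adjT' eqxx orbT.
    have spl : forall u v, rs T f u v -> rs Txy f u v \/ (u = x /\ v = y) \/ (u = y /\ v = x).
      move=> u v /and3P[uf vf /(adj_split x y)] [h|h]; last by right.
      by left; rewrite /rs uf vf h.
    have := connect_add spl (hG f fG w y wf' yf).
    have r1 : subrel (connect (rs Txy f)) (connect (adj Txy)).
      by apply: connect_sub => u v /and3P[_ _ h]; apply: connect1.
    have r2 : subrel (connect (rs Txy f)) (connect (rs T' f)).
      apply: connect_sub => u v /and3P[uf vf h]; apply: connect1.
      by rewrite /rs uf vf sub1.
    case=> [h|[h _]|[h _]]; try exact: r2.
    by move/r1: h; rewrite symc (negbTE nxw).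
  move=> p q pf qf; apply: (connect_sub _ (hG f fG p q pf qf)).
  move=> u v /and3P[uf vf]; case/(adj_split x y) => [h|[[eu ev]|[eu ev]]].
  - by apply: connect1; rewrite /rs uf vf sub1.
  - by rewrite eu ev; subst; apply: cf.
  - by rewrite eu ev symf; subst; apply: cf.
have := hS T' (conj treeT' hG') x y xS yS.
apply/negP; apply: contra hxy' => hc.
apply: (connect_sub _ hc) => u v /and3P[uS vS]; rewrite adjT' => /orP[h|/eqP h].
  exact: connect1.
case: (set2_eq h) => [[_ vw]|[uw _]]; first by rewrite -vw vS in wNS.
by rewrite -uw uS in wNS.
Qed.

Lemma key (G : seq {set V}) T S x y w : host_tree G T ->
  (forall E, host_tree G E -> induces_connected E S) ->
  [set x; y] \in T -> x \in S -> y \in S -> w \in Mg G [set x; y] -> w \in S.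
Proof.
move=> hT hS hxy xS yS wM; apply/negPn/negP => wNS.
have hb := tree_bridge (proj1 hT) hxy.
have symc : connect_sym (adj (T :\ [set x; y])) := sym_connect_sym (adj_sym _).
case: (boolP (connect (adj (T :\ [set x; y])) x w)) => hxw; last first.
  exact: (key1 hT hS hxy xS yS wM wNS hxw).
have hyx : [set y; x] = [set x; y] by rewrite setUC.
apply: (key1 (x := y) (y := x) (w := w) hT hS); rewrite ?hyx //.
apply: contra hb => hyw; apply: (connect_trans hxw); by rewrite symc.
Qed.

Lemma gen (G : seq {set V}) S : (exists T, host_tree G T) ->
  (forall E, host_tree G E -> induces_connected E S) -> S != set0 ->
  exists Ms : seq {set V},
    [/\ forall m, m \in Ms -> add_ok G m /\ remove_ok G m, add_ok Ms S & remove_ok Ms S].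
Proof.
move=> [T hT] hS /set0Pn [s0 s0S].
case: (boolP (#|S| == 1)) => [/eqP c1|c1].
  by exists [::]; split => //; left.
have hTc := hS T hT.
case: (proj1 hT) => h2 _ _.
set Es := [seq e <- enum T | (e : {set V}) \subset S].
have EsP e : (e \in Es) = (e \in T) && (e \subset S).
  by rewrite mem_filter mem_enum andbC.
set Ms := map (Mg G) Es.
have eM (e : {set V}) z : z \in e -> z \in Mg G e.
  move=> ze; rewrite /Mg in_bigcapP; apply/allP => f _; apply/implyP => /subsetP h.
  exact: h _ ze.
have okM : forall m, m \in Ms -> add_ok G m /\ remove_ok G m.
  move=> m /mapP[e eEs ->].
  have eT : e \in T by move: eEs; rewrite EsP => /andP[].
  have [z ze] : exists z, z \in e.
    by move: (h2 e eT) => /eqP/cards2P[a [b [_ ->]]]; exists a; rewrite set21.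
  have ne : Mg G e != set0 by apply/set0Pn; exists z; apply: eM.
  move: ne; rewrite /Mg -big_filter; case hF : (filter _ G) => [|f F] ne.
    by rewrite big_nil; split; right; left.
  have allF : all (mem G) (f :: F).
    by rewrite -hF; apply/allP => g; rewrite mem_filter => /andP[].
  split.
    by do 3 right; left; exists (f :: F); split.
  by do 3 right; left; exists (f :: F); split.
have eqS : S = \bigcup_(m <- Ms) m.
  apply/setP => z; rewrite in_bigcup; apply/idP/idP.
  - move=> zS.
    have [t tS tz] : exists2 t, t \in S & t != z.
      have : 0 < #|S :\ z|.
        move: c1; rewrite (cardsD1 z) zS; case: #|S :\ z| => //.
      by case/card_gt0P => t; rewrite in_setD1 => /andP[tz tS]; exists t.
    move/connectP: (hTc z t zS tS) => [[|y p] /= hp ht]; first by rewrite ht eqxx in tz.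
    case/andP: hp => /and3P[_ yS hzy] _.
    apply/hasP; exists (Mg G [set z; y]).
      by apply: map_f; rewrite EsP set2_sub zS yS !andbT; exact: hzy.
    by apply: (eM [set z; y]); rewrite set21.
  - case/hasP => m /mapP[e eEs ->] zm.
    move: eEs; rewrite EsP => /andP[eT eS].
    move: (h2 e eT) => /eqP/cards2P[a [b [_ eab]]].
    rewrite eab set2_sub in eS; case/andP: eS => aS bS.
    rewrite eab in zm.
    have abT : [set a; b] \in T by rewrite -eab.
    exact: (key hT hS abT aS bS zm).
have Ms0 : Ms != [::].
  by apply/eqP => h; move: s0S; rewrite eqS h big_nil inE.
have cf : connected_family Ms.
  move=> i j.
  have szM : size Ms = size Es := size_map _ _.
  have nthM (k : 'I_(size Ms)) : nth set0 Ms k = Mg G (nth set0 Es k).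
    by rewrite (nth_map set0) // -szM.
  have inEs (k : 'I_(size Ms)) : nth set0 Es k \in Es by rewrite mem_nth // -szM.
  have pick (k : 'I_(size Ms)) : exists2 z, z \in S & z \in nth set0 Ms k.
    move: (inEs k); rewrite EsP => /andP[eT eS].
    move: (h2 _ eT) => /eqP/cards2P[a [b [_ eab]]].
    exists a; first by move/subsetP: eS; apply; rewrite eab set21.
    by rewrite nthM; apply: eM; rewrite eab set21.
  case: (pick i) => xi xiS xiM; case: (pick j) => xj xjS xjM.
  suff C : forall v, connect (rs T S) xi v -> forall k : 'I_(size Ms),
      v \in nth set0 Ms k ->
      connect (fun a b : 'I_(size Ms) => nth set0 Ms a :&: nth set0 Ms b != set0) i k.
    exact: C _ (hTc _ _ xiS xjS) j xjM.
  move=> v /connectP[p hp ->] {v}.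
  elim/last_ind: p hp => [|p z IH] /=.
    by move=> _ k xk; apply: connect1; apply/set0Pn; exists xi; rewrite inE xiM xk.
  rewrite rcons_path last_rcons => /andP[hp /and3P[uS zS huz]] k zk.
  have eEs : [set last xi p; z] \in Es by rewrite EsP set2_sub uS zS !andbT; exact: huz.
  have hk : index [set last xi p; z] Es < size Ms by rewrite szM index_mem.
  have Mk : nth set0 Ms (Ordinal hk) = Mg G [set last xi p; z].
    by rewrite nthM /= nth_index.
  apply: (connect_trans (IH hp (Ordinal hk) _)); first by rewrite Mk; apply: eM; rewrite set21.
  by apply: connect1; apply/set0Pn; exists z; rewrite inE zk Mk eM // set22.
exists Ms; split => //.
- by do 5 right; exists Ms; split.
- by do 4 right; exists Ms; split.
Qed.

Section Reach.
Implicit Types (K L X Y Z G Ms : seq {set V}).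

Lemma allsub K K' F : {subset K <= K'} -> all (mem K) F -> all (mem K') F.
Proof. by move=> s /allP h; apply/allP => z /h; apply: s. Qed.

Lemma add_mono K K' e : {subset K <= K'} -> add_ok K e -> add_ok K' e.
Proof.
move=> s [h|[h|[h|[[F [h1 h2 h3 h4]]|[[e1 [e2 [h1 h2 h3 h4]]]|[F [h1 h2 h3 h4]]]]]]].
- by left.
- by right; left.
- by do 2 right; left; apply: s.
- by do 3 right; left; exists F; split => //; apply: allsub h2.
- by do 4 right; left; exists e1, e2; split => //; apply: s.
- by do 5 right; exists F; split => //; apply: allsub h2.
Qed.

Lemma rem_mono K K' e : {subset K <= K'} -> remove_ok K e -> remove_ok K' e.
Proof.
move=> s [h|[h|[h|[[F [h1 h2 h3]]|[F [h1 h2 h3 h4]]]]]].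
- by left.
- by right; left.
- by do 2 right; left; apply: s.
- by do 3 right; left; exists F; split => //; apply: allsub h2.
- by do 4 right; exists F; split => //; apply: allsub h2.
Qed.

Lemma perm_reach X Y : perm_eq X Y -> reachable X Y.
Proof.
case: X => [|a X] hp.
  by move: (perm_size hp) => /esym/size0nil ->; apply: reach_refl.
apply: (@reach_step _ _ (a :: Y)).
  apply: (@reach_step _ _ _ _ (reach_refl _)).
  apply: (@step_add _ _ a).
    by do 2 right; left; rewrite mem_head.
  by rewrite perm_cons perm_sym.
apply: (@step_remove _ _ a).
  by do 2 right; left; rewrite -(perm_mem hp) mem_head.
exact: perm_refl.
Qed.

Lemma reach_trans X Y Z : reachable X Y -> reachable Y Z -> reachable X Z.
Proof.
move=> hXY; elim=> [|Y1 Y2 _ IH hs] //.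
exact: reach_step IH hs.
Qed.

Lemma add_many K L : (forall e, e \in L -> add_ok K e) -> reachable K (L ++ K).
Proof.
elim: L => [|a L IH] h /=; first exact: reach_refl.
apply: (reach_step (IH _)).
  by move=> e eL; apply: h; rewrite inE eL orbT.
apply: (@step_add _ _ a); last exact: perm_refl.
apply: add_mono (h a (mem_head _ _)).
by move=> z zK; rewrite mem_cat zK orbT.
Qed.

Lemma remove_many K L : (forall e, e \in L -> remove_ok K e) -> reachable (L ++ K) K.
Proof.
elim: L => [|a L IH] h /=; first exact: reach_refl.
apply: reach_trans (IH _); last by move=> e eL; apply: h; rewrite inE eL orbT.
apply: (@reach_step _ _ _ _ (reach_refl _)).
apply: (@step_remove _ _ a); last exact: perm_refl.
apply: rem_mono (h a (mem_head _ _)).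
by move=> z zK; rewrite mem_cat zK orbT.
Qed.

Lemma perm_mid (x : {set V}) s1 s2 : perm_eq (x :: s1 ++ s2) (s1 ++ x :: s2).
Proof. by apply/permP => p; rewrite /= !count_cat /= addnCA. Qed.

Lemma gen_add G K S Ms : {subset G <= K} ->
  (forall m, m \in Ms -> add_ok G m /\ remove_ok G m) -> add_ok Ms S ->
  reachable K (S :: K).
Proof.
move=> sGK hM hA.
have r1 : reachable K (Ms ++ K).
  by apply: add_many => m /hM[h _]; apply: add_mono h.
have r2 : reachable K (S :: Ms ++ K).
  apply: (reach_step r1); apply: (@step_add _ _ S); last exact: perm_refl.
  by apply: add_mono hA => z zM; rewrite mem_cat zM.
apply: reach_trans (reach_trans r2 (perm_reach (perm_mid _ _ _))) _.
apply: remove_many => m /hM[_ h]; apply: rem_mono h.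
by move=> z /sGK zK; rewrite inE zK orbT.
Qed.

Lemma gen_rem G K S Ms : {subset G <= K} ->
  (forall m, m \in Ms -> add_ok G m /\ remove_ok G m) -> remove_ok Ms S ->
  reachable (S :: K) K.
Proof.
move=> sGK hM hR.
have r1 : reachable (S :: K) (Ms ++ S :: K).
  apply: add_many => m /hM[h _]; apply: add_mono h.
  by move=> z /sGK zK; rewrite inE zK orbT.
have r2 : reachable (S :: K) (Ms ++ K).
  apply: (reach_trans r1); apply: (reach_trans (perm_reach _)).
    by rewrite perm_sym; apply: perm_mid.
  apply: (@reach_step _ _ _ _ (reach_refl _)).
  apply: (@step_remove _ _ S); last exact: perm_refl.
  by apply: rem_mono hR => z zM; rewrite mem_cat zM.
apply: (reach_trans r2); apply: remove_many => m /hM[_ h]; exact: rem_mono h.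
Qed.

End Reach.
End Graph.

Theorem mainTheorem7 (V : finType) (H H' : seq {set V}) :
  hypertree H -> hypertree H' ->
  (equivalent H H' <-> reachable H H').
Proof.
move=> [hgH [T hT]] [hgH' [T' hT']]; split; last exact: reach_equiv.
move=> heq.
have A : forall L, {subset L <= H'} -> reachable H (L ++ H).
  elim=> [|a L IH] sL /=; first exact: reach_refl.
  have aH' : a \in H' by apply: sL; rewrite mem_head.
  apply: (reach_trans (IH _)); first by move=> z zL; apply: sL; rewrite inE zL orbT.
  have hc : forall E, host_tree H E -> induces_connected E a.
    by move=> E /(heq E) [_ h]; apply: h.
  have ha : a != set0 by move/allP: hgH' => /(_ a aH').
  have [Ms [hM hA _]] := gen (ex_intro _ T hT) hc ha.
  apply: (gen_add (G := H)) hM hA.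
  by move=> z zH; rewrite mem_cat zH orbT.
have B : forall L, {subset L <= H} -> reachable (L ++ H') H'.
  elim=> [|a L IH] sL /=; first exact: reach_refl.
  have aH : a \in H by apply: sL; rewrite mem_head.
  apply: reach_trans (IH _); last by move=> z zL; apply: sL; rewrite inE zL orbT.
  have hc : forall E, host_tree H' E -> induces_connected E a.
    by move=> E /(heq E) [_ h]; apply: h.
  have ha : a != set0 by move/allP: hgH => /(_ a aH).
  have [Ms [hM _ hR]] := gen (ex_intro _ T' hT') hc ha.
  apply: (gen_rem (G := H')) hM hR.
  by move=> z zH; rewrite mem_cat zH orbT.
have r1 : reachable H (H' ++ H) by apply: A.
have r2 : reachable (H ++ H') H' by apply: B.
apply: (reach_trans r1); apply: (reach_trans _ r2).
by apply: perm_reach; rewrite perm_catC.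
Qed.
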